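(* Let $\bar{\mathcal{G}}=(\bar{\mathcal{V}},\bar{\mathcal{E}})$ be a finite simple 2-connected graph and $\bar u\in\bar{\mathcal{V}}$, $L=|\bar{\mathcal{V}}|-1$. Then there is an enumeration $\bar v_1,\dots,\bar v_L$ of $\bar{\mathcal{V}}\setminus\{\bar u\}$ such that, writing $\bar{\mathcal{V}}_l=\{\bar v_1,\dots,\bar v_l\}$ and $\mathcal{V}_l$ for the set of edges of $\bar{\mathcal{G}}$ incident to at least one vertex of $\bar{\mathcal{V}}_l$: (i) the graph $\mathrm{LG}(\bar{\mathcal{V}}_l)$ is connected for every $l=1,\dots,L$, and (ii) $\mathcal{V}_l\setminus\mathcal{V}_{l-1}\ne\emptyset$ for every $l=2,\dots,L$.
   Context: For $\bar{\mathcal{V}}'\subseteq\bar{\mathcal{V}}$, $\mathrm{LG}(\bar{\mathcal{V}}')$ is the graph whose vertex set is the set of edges of $\bar{\mathcal{G}}$ incident to at least one vertex of $\bar{\mathcal{V}}'$, in which two distinct such edges $e,e'$ are adjacent iff they share an endpoint belonging to $\bar{\mathcal{V}}'$. (Equivalently, $\mathrm{LG}(\bar{\mathcal{V}}')$ is obtained by placing a complete graph on the set of edges incident to each $\bar v\in\bar{\mathcal{V}}'$ and gluing.) $\mathrm{LG}(\bar{\mathcal{V}})$ is the line graph of $\bar{\mathcal{G}}$. A graph is 2-connected if it is connected, has at least 3 vertices, and has no cut vertex. *)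

(* Defs.v *)
From mathcomp Require Import all_boot.
Set Implicit Arguments. Unset Strict Implicit. Unset Printing Implicit Defensive.

Definition simple_graph (T : finType) (e : rel T) : Prop :=
  symmetric e /\ irreflexive e.

Definition edges (T : finType) (e : rel T) : {set {set T}} :=
  [set E : {set T} | [exists x, exists y, e x y && (E == [set x; y])]].

(* A (vertex set A, relation r) graph is connected: any two vertices of A are
   joined by an r-path staying inside A. (Empty A counts as connected, but
   it is never empty where used.) *)
Definition connected_on (U : finType) (A : {set U}) (r : rel U) : Prop :=
  forall x y, x \in A -> y \in A ->
    connect (fun a b => [&& a \in A, b \in A & r a b]) x y.

Definition graph_connected (T : finType) (e : rel T) : Prop :=
  connected_on [set: T] e.

Definition two_connected (T : finType) (e : rel T) : Prop :=
  [/\ graph_connected e, 3 <= #|T| &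
      forall v : T, connected_on [set~ v] e].

Definition inc_edges (T : finType) (e : rel T) (V' : {set T}) : {set {set T}} :=
  [set E in edges e | [exists v in V', v \in E]].

Definition LG_adj (T : finType) (V' : {set T}) : rel {set T} :=
  fun E E' => (E != E') && [exists v in V', (v \in E) && (v \in E')].

Definition LG_connected (T : finType) (e : rel T) (V' : {set T}) : Prop :=
  connected_on (inc_edges e V') (LG_adj V').

(* Main.v *)
Require Import Defs.
From mathcomp Require Import all_boot.
Set Implicit Arguments. Unset Strict Implicit. Unset Printing Implicit Defensive.

Definition rr (T : finType) (e : rel T) (A : {set T}) : rel T :=
  fun a b => [&& a \in A, b \in A & e a b].

Lemma connect_exit (T : finType) (r : rel T) (C : {set T}) a b :
  connect r a b -> a \in C -> b \notin C ->
  exists x y, [/\ r x y, x \in C & y \notin C].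
Proof.
move/connectP=> [p]; elim: p a => [|c p IH] a /=.
  by move=> _ -> ->.
move=> /andP[rac pc] lb aC bC.
case: (boolP (c \in C)) => cC; first exact: (IH c pc lb cC bC).
by exists a, c.
Qed.

Section Peel.
Variables (T : finType) (e : rel T).
Hypothesis esym : symmetric e.

Lemma rr_sym A : symmetric (rr e A).
Proof. by move=> a b; rewrite /rr esym; case: (a \in A); case: (b \in A). Qed.

Lemma rr_connect_sym A a b : connect (rr e A) a b = connect (rr e A) b a.
Proof. exact: (sym_connect_sym (rr_sym A)). Qed.

Definition cbool (A : {set T}) :=
  [forall a in A, [forall b in A, connect (rr e A) a b]].

Lemma cboolP A : reflect (connected_on A e) (cbool A).
Proof.
apply: (iffP idP) => [/forall_inP H a b aA bA | H].
  exact: (forall_inP (H a aA)).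
apply/forall_inP => a aA; apply/forall_inP => b bA; exact: H.
Qed.

Lemma not_cbool A : ~~ cbool A ->
  exists a b, [/\ a \in A, b \in A & ~~ connect (rr e A) a b].
Proof.
move/forall_inPn=> [a aA] /forall_inPn [b bA nab]; by exists a, b.
Qed.

Variables (u : T) (W : {set T}).
Hypothesis uW : u \notin W.
Hypothesis Gconn : graph_connected e.
Hypothesis noCut : forall v, connected_on [set~ v] e.
Hypothesis WC : connected_on W e.

Definition N := [set x in W | [exists z, (z \notin W) && e x z]].
Definition C x y := [set z in W :\ x | connect (rr e (W :\ x)) y z].

Lemma C_closed x y a b : a \in C x y -> b \in W :\ x -> e a b -> b \in C x y.
Proof.
rewrite !inE => /andP[/andP[ax aW] ya] /andP[bx bW] eab.
rewrite bx bW /=; apply: connect_trans ya _; apply: connect1.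
by rewrite /rr !inE ax aW bx bW eab.
Qed.

Lemma C_sub x y z : z \in C x y -> z \in W :\ x.
Proof. by rewrite inE => /andP[]. Qed.

Lemma C_self x y : y \in W :\ x -> y \in C x y.
Proof. by move=> yW; rewrite inE yW connect0. Qed.

Lemma exists_N_in_C x y : x \in W -> y \in W :\ x ->
  exists2 y', y' \in C x y & y' \in N.
Proof.
move=> xW yW.
have ux : u \in [set~ x] by rewrite !inE; apply: contraNneq uW => ->.
have yx : y \in [set~ x] by move: yW; rewrite !inE => /andP[].
have := noCut yx ux => cyu.
have uC : u \notin C x y by rewrite inE !inE (negbTE uW) andbF.
have [a [b [rab aC bC]]] := connect_exit cyu (C_self yW) uC.
move: rab; rewrite /rr => /and3P[_ bx eab].
exists a => //.
have bW : b \notin W.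
  apply: contra bC => bW; apply: (C_closed aC) => //.
  by move: bx; rewrite !inE bW andbT.
rewrite inE (subsetP (subD1set W x) _ (C_sub aC)) /=.
by apply/existsP; exists b; rewrite bW eab.
Qed.

Lemma outside_conn x y y' w : x \in W -> y' \in C x y -> w \in W ->
  w \notin C x y -> connect (rr e (W :\ y')) w x.
Proof.
move=> xW y'C wW wC.
have := WC wW xW => /connectP [p pp lp].
elim: p w wW wC pp lp => [|b p IH] a aW aC /=.
  by move=> _ ->; exact: connect0.
move=> /andP[rab pp] lp.
case: (eqVneq a x) => [->|ax]; first exact: connect0.
move: rab; rewrite /rr => /and3P[_ bW eab].
have bC : b \notin C x y.
  apply: contra aC => bC; apply: (C_closed bC); first by rewrite !inE ax aW.
  by rewrite esym.
apply: connect_trans (IH b bW bC pp lp); apply: connect1.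
rewrite /rr !inE aW bW eab !andbT.
by apply/andP; split; [apply: contraNneq aC => -> | apply: contraNneq bC => ->].
Qed.

Lemma aux n : forall x y, x \in N -> y \in W :\ x -> #|C x y| <= n ->
  C x y != W :\ x -> exists2 x', x' \in N & connected_on (W :\ x') e.
Proof.
elim: n => [|n IH] x y xN yW.
  move=> cn; have h : 0 < #|C x y| by apply/card_gt0P; exists y; apply: C_self.
  by move: cn; rewrite leqNgt h.
move=> cn Cne.
have xW : x \in W by move: xN; rewrite inE => /andP[].
have [y' y'C y'N] := exists_N_in_C xW yW.
case: (boolP (cbool (W :\ y'))) => [/cboolP|]; first by exists y'.
move/not_cbool=> [a [b [aW' bW' nab]]].
have y'x : y' != x by move: (C_sub y'C); rewrite !inE => /andP[].
have xW' : x \in W :\ y' by rewrite !inE xW eq_sym y'x.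
have [a0 [a0W' na0x]] : exists a0, a0 \in W :\ y' /\ ~~ connect (rr e (W :\ y')) a0 x.
  case: (boolP (connect (rr e (W :\ y')) a x)) => ax; last by exists a.
  exists b; split => //; apply: contra nab => bx.
  by apply: connect_trans ax _; rewrite rr_connect_sym.
have a0W : a0 \in W by move: a0W'; rewrite !inE => /andP[].
have a0C : a0 \in C x y.
  apply: contraNT na0x => a0C; exact: (outside_conn xW y'C a0W a0C).
have sub : C y' a0 \proper C x y.
  apply/properP; split.
    apply/subsetP => z zD; apply: contraT => zC.
    have zW : z \in W by move: (C_sub zD); rewrite !inE => /andP[].
    move: zD; rewrite inE => /andP[_ a0z].
    have := outside_conn xW y'C zW zC => zx.
    by move: na0x; rewrite (connect_trans a0z zx).
  by exists y' => //; rewrite inE !inE eqxx.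
apply: (IH y' a0 y'N a0W').
  by rewrite -ltnS; apply: leq_trans (proper_card sub) cn.
apply/negP => /eqP DE; move: xW'; rewrite -DE inE => /andP[_].
by rewrite (negbTE na0x).
Qed.

Lemma peel (w : T) : w \in W -> exists2 x, x \in N & connected_on (W :\ x) e.
Proof.
move=> wW.
have := Gconn (in_setT w) (in_setT u) => cwu.
have [a [b [rab aW bW]]] := connect_exit cwu wW uW.
move: rab; rewrite /rr => /and3P[_ _ eab].
have aN : a \in N by rewrite inE aW; apply/existsP; exists b; rewrite bW eab.
case: (boolP (cbool (W :\ a))) => [/cboolP|]; first by exists a.
move/not_cbool=> [p [q [pW qW npq]]].
apply: (aux (n := #|C a p|) aN pW) => //.
apply/negP => /eqP CE; move: qW; rewrite -CE inE => /andP[_].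
by rewrite (negbTE npq).
Qed.

End Peel.

Lemma build (T : finType) (e : rel T) (u : T) :
  symmetric e -> graph_connected e -> (forall v, connected_on [set~ v] e) ->
  forall n (W : {set T}), #|W| = n -> u \notin W -> connected_on W e ->
  exists s : seq T,
    [/\ uniq s, (forall v, (v \in s) = (v \in W)),
        (forall l, 1 <= l <= size s -> connected_on [set v in take l s] e) &
        (forall l, 2 <= l <= size s ->
           inc_edges e [set v in take l s] :\: inc_edges e [set v in take l.-1 s]
             != set0)].
Proof.
move=> esym Gconn noCut; elim=> [|n IH] W cW uW WC.
  exists [::]; split => //; last by move=> l /andP[/leq_trans h /h].
    by move=> v; move/eqP: cW; rewrite cards_eq0 => /eqP ->; rewrite inE.
  by move=> l /andP[/leq_trans h /h].
have [w wW] : exists w, w \in W by apply/set0Pn; rewrite -card_gt0 cW.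
have [x xN Wx] := peel esym uW Gconn noCut WC wW.
have xW : x \in W by move: xN; rewrite inE => /andP[].
have cWx : #|W :\ x| = n by move: cW; rewrite (cardsD1 x) xW add1n => -[].
have uWx : u \notin W :\ x by rewrite !inE negb_and uW orbT.
have [s [us ms ci cii]] := IH _ cWx uWx Wx.
have setW : [set v in rcons s x] = W.
  apply/setP => v; rewrite !inE mem_rcons in_cons ms !inE.
  by case: (eqVneq v x) => [->|] //=.
have setWx : [set v in s] = W :\ x by apply/setP => v; rewrite !inE ms !inE.
have tk l : l <= size s -> take l (rcons s x) = take l s.
  by move=> ls; rewrite -cats1 takel_cat.
have tkS : take (size s).+1 (rcons s x) = rcons s x.
  by rewrite take_oversize // size_rcons.
exists (rcons s x); split.
- by rewrite rcons_uniq us andbT ms !inE eqxx.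
- by move=> v; rewrite -setW inE.
- move=> l; rewrite size_rcons => /andP[l1]; rewrite leq_eqVlt => /orP[/eqP ->|].
    by rewrite tkS setW.
  by rewrite ltnS => ls; rewrite tk //; apply: ci; rewrite l1.
- move=> l; rewrite size_rcons => /andP[l1]; rewrite leq_eqVlt => /orP[/eqP ->|].
    rewrite tkS /= tk // take_size setW setWx.
    move: xN; rewrite inE => /andP[_ /existsP [z /andP[zW exz]]].
    apply/set0Pn; exists [set x; z]; rewrite !inE.
    have ed : [set x; z] \in edges e.
      by rewrite inE; apply/existsP; exists x; apply/existsP; exists z; rewrite exz eqxx.
    move: ed; rewrite inE => ed; rewrite ed /=; apply/andP; split.
      apply/exists_inPn => v; rewrite !inE => /andP[vx vW].
      apply/negP => /orP[/eqP vx'|/eqP vz]; first by rewrite vx' eqxx in vx.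
      by rewrite -vz vW in zW.
    by apply/existsP; exists x; rewrite xW !inE eqxx.
  rewrite ltnS => ls; rewrite tk // tk; first by apply: cii; rewrite l1.
  by apply: leq_trans ls; apply: leq_pred.
Qed.

Lemma LG_of_conn (T : finType) (e : rel T) (V : {set T}) :
  symmetric e -> connected_on V e -> LG_connected e V.
Proof.
move=> esym VC E E' EI E'I.
set R := fun a b => [&& a \in inc_edges e V, b \in inc_edges e V & LG_adj V a b].
have share : forall v F F', v \in V -> F \in inc_edges e V -> F' \in inc_edges e V ->
    v \in F -> v \in F' -> connect R F F'.
  move=> v F F' vV FI F'I vF vF'.
  case: (eqVneq F F') => [->|FF]; first exact: connect0.
  apply: connect1; rewrite /R FI F'I /LG_adj FF /=.
  by apply/exists_inP; exists v; rewrite ?vF.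
have [v vV vE] : exists2 v, v \in V & v \in E.
  by move: EI; rewrite inE => /andP[_ /exists_inP [w wV wE]]; exists w.
have [v' v'V v'E'] : exists2 v, v \in V & v \in E'.
  by move: E'I; rewrite inE => /andP[_ /exists_inP [w wV wE]]; exists w.
have := VC v v' vV v'V => /connectP [p pp lp].
elim: p v vV E EI vE pp lp => [|c p IH] a aV F FI aF /=.
  by move=> _ lp; subst; apply: (share a).
move=> /andP[/and3P[_ cV eac] pp] lp.
have Fac : [set a; c] \in inc_edges e V.
  rewrite inE; apply/andP; split.
    by rewrite inE; apply/existsP; exists a; apply/existsP; exists c; rewrite eac eqxx.
  by apply/exists_inP; exists a; rewrite ?inE ?eqxx.
apply: connect_trans (share a _ _ aV FI Fac aF _) _; first by rewrite !inE eqxx.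
by apply: (IH c cV) => //; rewrite !inE eqxx orbT.
Qed.

Theorem mainTheorem10 (T : finType) (e : rel T) (u : T) :
  simple_graph e -> two_connected e ->
  exists s : seq T,
    [/\ uniq s, (forall v, (v \in s) = (v != u)),
        (forall l, 1 <= l <= size s ->
           LG_connected e [set v in take l s]) &
        (forall l, 2 <= l <= size s ->
           inc_edges e [set v in take l s] :\: inc_edges e [set v in take l.-1 s]
             != set0)].
Proof.
move=> [esym _] [Gconn _ noCut].
have uW : u \notin [set~ u] by rewrite !inE eqxx.
have [s [us ms ci cii]] := build esym Gconn noCut erefl uW (noCut u).
exists s; split => //.
  by move=> v; rewrite ms !inE.
by move=> l hl; apply: LG_of_conn => //; apply: ci.
Qed.
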